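(* Let $q\in\Bbbk^\times$. (1) The linear map $\phi:A(q)\to A(q^{-1})$ with $\phi(e_1)=e_1$, $\phi(e_2)=e_2$, $\phi(a)=c$, $\phi(b)=d$, $\phi(c)=a$, $\phi(d)=b$ extends to an isomorphism. (2) The linear map $\psi:A(q)\to A(q^{-1})$ with $\psi(e_1)=e_2$, $\psi(e_2)=e_1$, $\psi(a)=qb$, $\psi(b)=a$, $\psi(c)=d$, $\psi(d)=c$ extends to an isomorphism.
   Context: $\Bbbk$ is an algebraically closed field of characteristic zero. Paths are written left to right. Let $Q$ be the quiver with vertices $e_1,e_2$, arrows $a,c:e_1\to e_2$ and $b,d:e_2\to e_1$; $A(q)=\Bbbk Q/(ab-cd,\ ba-q\,dc)$. *)

(* Defs.v *)
From HB Require Import structures.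
From mathcomp Require Import all_boot all_order all_algebra.
Set Implicit Arguments. Unset Strict Implicit. Unset Printing Implicit Defensive.
Import GRing.Theory.
Local Open Scope ring_scope.

(* Generators of the path algebra of Q: vertices e1 e2, arrows
   a c : e1 -> e2 and b d : e2 -> e1.  Paths are written left to right,
   so the path "a then b" is the product a * b, and e1 * a = a = a * e2. *)
Record gens (K : fieldType) (R : algType K) := Gens {
  ge1 : R; ge2 : R; ga : R; gb : R; gc : R; gd : R }.

(* Defining relations of A(q) = kQ/(ab - cd, ba - q dc), presented by the
   standard presentation of the path algebra kQ (complete set of orthogonal
   idempotents e1, e2, and arrows a = e_{s(a)} a e_{t(a)}) plus the two
   relations. *)
Definition relA (K : fieldType) (R : algType K) (q : K) (g : gens R) : Prop :=
  [/\ ge1 g + ge2 g = 1,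
      ge1 g * ge1 g = ge1 g /\ ge2 g * ge2 g = ge2 g,
      ge1 g * ge2 g = 0 /\ ge2 g * ge1 g = 0,
      [/\ ga g = ge1 g * ga g * ge2 g, gb g = ge2 g * gb g * ge1 g,
          gc g = ge1 g * gc g * ge2 g & gd g = ge2 g * gd g * ge1 g]
    & ga g * gb g = gc g * gd g /\ gb g * ga g = q *: (gd g * gc g)].

Definition sends_gens (K : fieldType) (R S : algType K) (f : R -> S)
  (g : gens R) (h : gens S) : Prop :=
  [/\ f (ge1 g) = ge1 h, f (ge2 g) = ge2 h, f (ga g) = ga h,
      f (gb g) = gb h & f (gc g) = gc h /\ f (gd g) = gd h].

Definition presentsA (K : fieldType) (R : algType K) (q : K) (g : gens R) : Prop :=
  relA q g /\
  forall (S : algType K) (h : gens S), relA q h ->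
    exists f : {lrmorphism R -> S},
      sends_gens f g h
      /\ forall f' : {lrmorphism R -> S},
        sends_gens f' g h ->
        f' =1 f.

(* Main.v *)
Require Import Defs.
From HB Require Import structures.
From mathcomp Require Import all_boot all_order all_algebra.
Import GRing.Theory.
Local Open Scope ring_scope.

Lemma mk_iso (K : fieldType) (R S : algType K) (p p' : K) (g : gens R) (h : gens S)
  (h1 : gens S) (g1 : gens R) :
  presentsA p g -> presentsA p' h -> relA p h1 -> relA p' g1 ->
  (forall (f : {lrmorphism R -> S}) (f' : {lrmorphism S -> R}),
     sends_gens f g h1 -> sends_gens f' h g1 ->
     sends_gens (f' \o f) g g /\ sends_gens (f \o f') h h) ->
  exists f : {lrmorphism R -> S}, bijective f /\ sends_gens f g h1.
Proof.
move=> [Rg Ug] [Rh Uh] R1 R2 Hc.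
have [f [Sf _]] := Ug S h1 R1.
have [f' [Sf' _]] := Uh R g1 R2.
have [C1 C2] := Hc f f' Sf Sf'.
have [f0 [_ U0]] := Ug R g Rg.
have [f1 [_ U1]] := Uh S h Rh.
have Sid : forall (T : algType K) (k : gens T), sends_gens (idfun : {lrmorphism T -> T}) k k.
  by move=> T k; split.
exists f; split => //; exists f'.
- move=> x; have E1 := U0 _ C1 x; have E2 := U0 _ (Sid _ g) x.
  by rewrite /= in E1 E2; rewrite E1 -E2.
- move=> x; have E1 := U1 _ C2 x; have E2 := U1 _ (Sid _ h) x.
  by rewrite /= in E1 E2; rewrite E1 -E2.
Qed.

Theorem lemma3p5 (K : closedFieldType) (charK0 : [pchar K] =i pred0)
  (q : K) (hq : q != 0)
  (Aq : algType K) (g : gens Aq) (HAq : presentsA q g)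
  (Aqi : algType K) (h : gens Aqi) (HAqi : presentsA q^-1 h) :
  (exists phi : {lrmorphism Aq -> Aqi}, bijective phi /\
     [/\ phi (ge1 g) = ge1 h, phi (ge2 g) = ge2 h, phi (ga g) = gc h,
         phi (gb g) = gd h & phi (gc g) = ga h /\ phi (gd g) = gb h])
  /\
  (exists psi : {lrmorphism Aq -> Aqi}, bijective psi /\
     [/\ psi (ge1 g) = ge2 h, psi (ge2 g) = ge1 h, psi (ga g) = q *: gb h,
         psi (gb g) = ga h & psi (gc g) = gd h /\ psi (gd g) = gc h]).
Proof.
have RG := HAq.1; have RH := HAqi.1.
case: RG => [G1 [GI1 GI2] [GO1 GO2] [GEa GEb GEc GEd] [GR1 GR2]].
case: RH => [H1 [HI1 HI2] [HO1 HO2] [HEa HEb HEc HEd] [HR1 HR2]].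
split.
- apply: (@mk_iso _ _ _ q q^-1 g h
    (Gens (ge1 h) (ge2 h) (gc h) (gd h) (ga h) (gb h))
    (Gens (ge1 g) (ge2 g) (gc g) (gd g) (ga g) (gb g))) => //.
  + split => //=; split => //.
    by rewrite HR2 scalerA mulfV // scale1r.
  + split => //=; split => //.
    by rewrite GR2 scalerA mulVf // scale1r.
  + move=> f f' [F1 F2 F3 F4 [F5 F6]] [F1' F2' F3' F4' [F5' F6']] /=.
    split; split => /=; rewrite ?F1 ?F2 ?F3 ?F4 ?F5 ?F6 ?F1' ?F2' ?F3' ?F4' ?F5' ?F6' //=;
      split => /=; rewrite ?F1 ?F2 ?F3 ?F4 ?F5 ?F6 ?F1' ?F2' ?F3' ?F4' ?F5' ?F6' //.
- apply: (@mk_iso _ _ _ q q^-1 g h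
    (Gens (ge2 h) (ge1 h) (q *: gb h) (ga h) (gd h) (gc h))
    (Gens (ge2 g) (ge1 g) (gb g) (q^-1 *: ga g) (gd g) (gc g))) => //.
  + split => //=; first by rewrite addrC.
    split => //; by rewrite -scalerAr -scalerAl -HEb.
    split; first by rewrite -scalerAl HR2 scalerA mulfV // scale1r.
    by rewrite -scalerAr HR1.
  + split => //=; first by rewrite addrC.
    split => //; by rewrite -scalerAr -scalerAl -GEa.
    split; first by rewrite -scalerAr GR2 scalerA mulVf // scale1r.
    by rewrite -scalerAl GR1.
  + move=> f f' [F1 F2 F3 F4 [F5 F6]] [F1' F2' F3' F4' [F5' F6']] /=.
    simpl in *.
    split; split => /=; rewrite ?F1 ?F2 ?F3 ?F4 ?F5 ?F6 ?F1' ?F2' ?F3' ?F4' ?F5' ?F6' //=;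
      try (split => /=; rewrite ?F5 ?F6 ?F5' ?F6' //).
    * by rewrite linearZ /= F4' scalerA mulfV // scale1r.
    * by rewrite linearZ /= F3 scalerA mulVf // scale1r.
Qed.
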